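(* For every positive integer $d$ and every $\epsilon\in(0,1)$ there exist $n_0$ and, for each $n\ge n_0$, a family $\mathcal{C}_n$ of subsets of $[n]^d$ such that: (i) every sum-free subset of $[n]^d$ is contained in some member of $\mathcal{C}_n$; (ii) every member of $\mathcal{C}_n$ contains at most $\epsilon n^{2d}$ Schur triples; (iii) $\log_2|\mathcal{C}_n|=o(n^d)$ as $n\to\infty$.
   Context: $[n]=\{1,\dots,n\}$, $[n]^d\subset\mathbb{Z}^d$ with coordinatewise addition. A set is sum-free if there are no $a,b,c$ in it (not necessarily distinct) with $a+b=c$. A Schur triple in a set $A$ is a set $\{a,b,c\}\subseteq A$ of three distinct elements with $a+b=c$. *)

(* Defs.v *)
From mathcomp Require Import all_boot.
From Stdlib Require Import Reals.

Set Implicit Arguments.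
Unset Strict Implicit.
Unset Printing Implicit Defensive.

(* A point of [n]^d is encoded as x : {ffun 'I_d -> 'I_n}; its i-th
   coordinate is (x i) + 1, which ranges over [n] = {1,...,n}. *)
Definition grid (n d : nat) : finType := {ffun 'I_d -> 'I_n}.

Definition coord {n d} (x : grid n d) (i : 'I_d) : nat := (x i).+1.

Definition is_sum {n d} (a b c : grid n d) : bool :=
  [forall i, coord a i + coord b i == coord c i].

Definition sum_free {n d} (A : {set grid n d}) : bool :=
  [forall a in A, forall b in A, forall c in A, ~~ is_sum a b c].

Definition schur_triples {n d} (A : {set grid n d}) : {set {set grid n d}} :=
  [set S : {set grid n d} | (S \subset A) &&
     [exists a, exists b, exists c,
        [&& S == [set a; b; c], a != b, a != c, b != c & is_sum a b c]]].

Definition log2 (x : R) : R := (ln x / ln 2)%R.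

(* Main.v *)
Require Import Defs.
From mathcomp Require Import all_boot zify.
From Stdlib Require Import Reals Lia Lra Psatz.
Set Implicit Arguments.
Unset Strict Implicit.
Unset Printing Implicit Defensive.

Lemma is_sumP {n d} (a b c : grid n d) :
  reflect (forall i, (a i : nat) + b i + 1 = c i) (is_sum a b c).
Proof.
apply: (iffP forallP) => H i; have := H i; rewrite /coord.
  move/eqP; lia.
move=> E; apply/eqP; lia.
Qed.

Lemma is_sumC {n d} (a b c : grid n d) : is_sum a b c = is_sum b a c.
Proof.
apply/is_sumP/is_sumP => H i; have := H i; lia.
Qed.

Lemma is_sum_uniq3 {n d} (a b c c' : grid n d) :
  is_sum a b c -> is_sum a b c' -> c = c'.
Proof.
move=> /is_sumP H /is_sumP H'; apply/ffunP => i; apply: ord_inj.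
have := H i; have := H' i; lia.
Qed.

Lemma is_sum_uniq2 {n d} (a b b' c : grid n d) :
  is_sum a b c -> is_sum a b' c -> b = b'.
Proof.
move=> /is_sumP H /is_sumP H'; apply/ffunP => i; apply: ord_inj.
have := H i; have := H' i; lia.
Qed.

Lemma is_sum_uniq1 {n d} (a a' b c : grid n d) :
  is_sum a b c -> is_sum a' b c -> a = a'.
Proof.
rewrite (is_sumC a) (is_sumC a'); exact: is_sum_uniq2.
Qed.

Lemma card_pair_dep (I J : finType) (P : pred I) (R : I -> pred J) :
  #|[set p : I * J | P p.1 && R p.1 p.2]| = \sum_(i | P i) #|[set j | R i j]|.
Proof.
rewrite -sum1dep_card -(pair_big_dep P R (fun _ _ => 1)); apply: eq_bigr => i _.
by rewrite sum1dep_card.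
Qed.

Lemma card_sep (T : finType) (R : {set T}) (P : pred T) :
  #|[set y in R | P y]| = \sum_(y in R) (P y : nat).
Proof.
rewrite -sum1dep_card big_mkcondr /=; apply: eq_bigr => y _.
by case: (P y).
Qed.

Lemma card_le1_uniq (T : finType) (P : pred T) :
  (forall x y, P x -> P y -> x = y) -> #|[set x | P x]| <= 1.
Proof.
move=> U; apply/card_le1_eqP => x y; rewrite !inE => Px Py; by rewrite (U _ _ Px Py).
Qed.

Definition deg {n d} (B : {set grid n d}) (a : grid n d) : nat :=
  \sum_(b in B) #|[set c in B | is_sum a b c]|.

Definition Tc {n d} (B : {set grid n d}) : nat := \sum_(a in B) deg B a.

Lemma deg_le {n d} (B : {set grid n d}) a : deg B a <= #|B|.
Proof.
rewrite /deg -sum1_card; apply: leq_sum => b _.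
apply: (leq_trans (subset_leq_card _) (card_le1_uniq (P := is_sum a b) _)).
  by apply/subsetP => c; rewrite !inE => /andP[].
move=> x y; exact: is_sum_uniq3.
Qed.

Lemma schur_le_Tc {n d} (B : {set grid n d}) : #|schur_triples B| <= Tc B.
Proof.
pose Q := [set q : (grid n d * grid n d) * grid n d |
  (q.1 \in setX B B) && ((q.2 \in B) && is_sum q.1.1 q.1.2 q.2)].
have -> : Tc B = #|Q|.
  rewrite /Q (card_pair_dep (fun p => p \in setX B B) (fun p c => (c \in B) && is_sum p.1 p.2 c)) /Tc /deg.
  rewrite (eq_bigl (fun p => (p.1 \in B) && (p.2 \in B))); last first.
    by case=> a b; rewrite in_setX.
  rewrite -(pair_big_dep (fun a => a \in B) (fun _ b => b \in B)
             (fun a b => #|[set c | (c \in B) && is_sum a b c]|)) /=.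
  apply: eq_bigr => a _; apply: eq_bigr => b _.
  by apply: eq_card => c; rewrite !inE.
apply: (leq_trans (subset_leq_card _) (leq_imset_card (fun q => [set q.1.1; q.1.2; q.2]) Q)).
apply/subsetP => S; rewrite inE => /andP[SB /existsP[a /existsP[b /existsP[c]]]].
case/and5P => /eqP defS _ _ _ sabc; subst S.
have aB : a \in B by apply: (subsetP SB); rewrite /= !inE eqxx.
have bB : b \in B by apply: (subsetP SB); rewrite /= !inE eqxx orbT.
have cB : c \in B by apply: (subsetP SB); rewrite /= !inE eqxx !orbT.
apply/imsetP; exists ((a, b), c) => //.
by rewrite inE /= in_setX aB bB cB sabc.
Qed.

Lemma sum_freeP {n d} (A : {set grid n d}) a b c :
  sum_free A -> a \in A -> b \in A -> c \in A -> ~~ is_sum a b c.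
Proof.
move=> /forall_inP H aA bA cA.
by move: (H a aA) => /forall_inP/(_ b bA)/forall_inP/(_ c cA).
Qed.

Definition Nb {n d} (X : {set grid n d}) (s : grid n d) : {set grid n d} :=
  [set y | [exists f in X, is_sum s f y || is_sum y f s]].
Definition NbS {n d} (X S : {set grid n d}) := \bigcup_(s in S) Nb X s.
Definition C1 {n d} (B X S : {set grid n d}) := B :\: NbS X S.
Definition Cont2 {n d} (B X S : {set grid n d}) r :=
  [set x in C1 B X S | #|C1 B X S :&: Nb X x| < r].

Lemma Nb_free {n d} (A X : {set grid n d}) s y :
  sum_free A -> X \subset A -> s \in A -> y \in A -> y \notin Nb X s.
Proof.
move=> sfA XA sA yA; rewrite inE; apply/negP => /exists_inP[f fX /orP[]].
  by apply/negP; apply: sum_freeP sfA sA (subsetP XA f fX) yA.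
by apply/negP; apply: sum_freeP sfA yA (subsetP XA f fX) sA.
Qed.

Lemma NbS_free {n d} (A X S : {set grid n d}) y :
  sum_free A -> X \subset A -> S \subset A -> y \in A -> y \notin NbS X S.
Proof.
move=> sfA XA SA yA; apply/bigcupP => -[s sS].
by apply/negP; apply: Nb_free sfA XA (subsetP SA s sS) yA.
Qed.

Lemma NbS_U1 {n d} (X S : {set grid n d}) a :
  NbS X (a |: S) = Nb X a :|: NbS X S.
Proof.
apply/setP => y; rewrite inE; apply/bigcupP/orP.
  by case=> s /setU1P[->|sS] yN; [left | right; apply/bigcupP; exists s].
case=> [yN | /bigcupP[s sS yN]]; first by exists a; rewrite ?setU11.
by exists s; rewrite ?setU1r.
Qed.

Lemma NbS0 {n d} (X : {set grid n d}) : NbS X set0 = set0.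
Proof. by rewrite /NbS big_set0. Qed.

Lemma greedy {n d} (A B X : {set grid n d}) r :
  0 < r -> A \subset B -> X \subset A -> sum_free A ->
  exists S : {set grid n d}, [/\ S \subset A, #|S| * r <= #|B| & A \subset Cont2 B X S r].
Proof.
move=> r0 AB XA sfA.
suff H : forall k (S : {set grid n d}), S \subset A -> #|S| * r + #|C1 B X S| <= #|B| ->
    #|C1 B X S| <= k ->
    exists S : {set grid n d}, [/\ S \subset A, #|S| * r <= #|B| & A \subset Cont2 B X S r].
  by apply: (H #|B| set0); rewrite ?sub0set // /C1 NbS0 setD0 ?cards0.
elim=> [|k IH] S SA inv Ck.
  exists S; split => //; first by apply: leq_trans inv; apply: leq_addr.
  apply/subsetP => y yA; rewrite inE.
  have yC : y \in C1 B X S.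
    by rewrite inE (subsetP AB y yA) andbT (NbS_free sfA XA SA yA).
  by move: Ck; rewrite leqn0 => /eqP/cards0_eq C0; rewrite C0 inE in yC.
case: (boolP [exists a in A, r <= #|C1 B X S :&: Nb X a|]) => [/exists_inP[a aA ra]|].
  have C1U : C1 B X (a |: S) = C1 B X S :\: Nb X a.
    apply/setP => y; rewrite /C1 NbS_U1 !in_setD in_setU negb_or.
    by case: (y \in Nb X a); case: (y \in NbS X S); case: (y \in B).
  apply: (IH (a |: S)).
  - by rewrite subUset sub1set aA SA.
  - rewrite C1U cardsD cardsU1.
    have := subset_leq_card (subsetIl (C1 B X S) (Nb X a)).
    move: inv ra; lia.
  - rewrite C1U cardsD; move: Ck ra; lia.
move=> /exists_inPn small.
exists S; split => //; first by apply: leq_trans inv; apply: leq_addr.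
apply/subsetP => y yA; rewrite inE.
rewrite inE (subsetP AB y yA) andbT (NbS_free sfA XA SA yA) //=.
by rewrite ltnNge small.
Qed.

Definition Dset {n d} (B : {set grid n d}) m N :=
  [set v in B | N <= deg B v * (2 * m)].

Lemma Dset_sub {n d} (B : {set grid n d}) m N : Dset B m N \subset B.
Proof. by apply/subsetP => v; rewrite inE => /andP[]. Qed.

Lemma Dset_big {n d} (B : {set grid n d}) m :
  let N := #|grid n d| in
  N * N < m * Tc B -> N < 2 * m * #|Dset B m N|.
Proof.
move=> N H.
set D := Dset B m N.
have BN : #|B| <= N by apply: max_card.
have E : Tc B = \sum_(a in D) deg B a + \sum_(a in B :\: D) deg B a.
  by rewrite /Tc (big_setID D) /= (setIidPr (Dset_sub B m N)).
have H1 : \sum_(a in D) deg B a <= #|D| * N.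
  rewrite -sum_nat_const; apply: leq_sum => a _; exact: leq_trans (deg_le B a) BN.
have H2 : \sum_(a in B :\: D) (deg B a * (2 * m)) <= #|B :\: D| * N.
  rewrite -sum_nat_const; apply: leq_sum => a; rewrite !inE.
  case: (a \in B); rewrite ?andbF ?andbT //= -ltnNge; exact: ltnW.
have H3 : #|B :\: D| <= N by apply: max_card.
rewrite -big_distrl /= in H2.
have H4 : N * N < N * (2 * m * #|D|).
  rewrite E in H; move: H H1 H2 H3; set s1 := \sum_(a in D) deg B a; set s2 := \sum_(a in B :\: D) deg B a.
  move=> H H1 H2 H3.
  have H5 : s2 * (2 * m) <= N * N by apply: leq_trans H2 _; rewrite leq_mul2r H3 orbT.
  have H6 : m * s1 <= m * (#|D| * N) by rewrite leq_mul2l H1 orbT.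
  nia.
move: H4; case: (posnP N) => [->|N0] //; by rewrite ltn_pmul2l.
Qed.

Lemma sum_sigma_le1 {n d} (C : {set grid n d}) f x :
  \sum_(y in C) (is_sum f x y : nat) <= 1.
Proof.
rewrite -card_sep; apply: leq_trans (card_le1_uniq (P := is_sum f x) _).
  by apply: subset_leq_card; apply/subsetP => y; rewrite !inE => /andP[].
move=> ? ?; exact: is_sum_uniq3.
Qed.

Lemma sum_sigma_le1' {n d} (C : {set grid n d}) f y :
  \sum_(x in C) (is_sum f x y : nat) <= 1.
Proof.
rewrite -card_sep; apply: leq_trans (card_le1_uniq (P := fun x => is_sum f x y) _).
  by apply: subset_leq_card; apply/subsetP => x; rewrite !inE => /andP[].
move=> ? ?; exact: is_sum_uniq2.
Qed.

Lemma deg_split {n d} (B C : {set grid n d}) f :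
  C \subset B -> deg B f <= deg C f + 2 * #|B :\: C|.
Proof.
move=> CB; set R := B :\: C.
rewrite /deg (big_setID C) /= (setIidPr CB).
have H1 : \sum_(x in R) #|[set y in B | is_sum f x y]| <= #|R|.
  rewrite -sum1_card; apply: leq_sum => x _; rewrite card_sep; exact: sum_sigma_le1.
have H2 : \sum_(x in C) #|[set y in B | is_sum f x y]| <=
          \sum_(x in C) #|[set y in C | is_sum f x y]| + #|R|.
  have -> : \sum_(x in C) #|[set y in B | is_sum f x y]| =
            \sum_(x in C) (#|[set y in C | is_sum f x y]| + \sum_(y in R) (is_sum f x y : nat)).
    apply: eq_bigr => x _; rewrite !card_sep (big_setID C) /= (setIidPr CB) //.
  rewrite big_split leq_add2l /= exchange_big /= -sum1_card.
  apply: leq_sum => y _; exact: sum_sigma_le1'.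
rewrite -/R; apply: leq_trans (leq_add H2 H1) _; rewrite -addnA leq_add2l; by rewrite mul2n -addnn.
Qed.

Lemma sum_f_le_Nb {n d} (F : {set grid n d}) x y :
  \sum_(f in F) (is_sum f x y : nat) <= (y \in Nb F x).
Proof.
case: (boolP (y \in Nb F x)) => yN.
  rewrite -card_sep; apply: leq_trans (card_le1_uniq (P := fun f => is_sum f x y) _).
    by apply: subset_leq_card; apply/subsetP => f; rewrite !inE => /andP[].
  move=> ? ?; exact: is_sum_uniq1.
rewrite leqn0 sum_nat_eq0; apply/forall_inP => f fF; rewrite eqb0.
apply/negP => s; move: yN; rewrite inE => /exists_inP; apply; exists f => //.
by rewrite is_sumC s.
Qed.

Lemma Wcont_le {n d} (B F S : {set grid n d}) r :
  \sum_(f in F) deg (Cont2 B F S r) f <= #|Cont2 B F S r| * r.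
Proof.
set C := Cont2 B F S r.
rewrite /deg.
have -> : \sum_(f in F) \sum_(x in C) #|[set y in C | is_sum f x y]| =
          \sum_(x in C) \sum_(y in C) \sum_(f in F) (is_sum f x y : nat).
  rewrite exchange_big; apply: eq_bigr => x _.
  rewrite (eq_bigr (fun f => \sum_(y in C) (is_sum f x y : nat))); last first.
    by move=> f _; rewrite card_sep.
  by rewrite exchange_big.
rewrite -sum_nat_const; apply: leq_sum => x xC.
apply: leq_trans (_ : \sum_(y in C) ((y \in Nb F x) : nat) <= r).
  apply: leq_sum => y _; exact: sum_f_le_Nb.
rewrite -card_sep.
move: xC; rewrite inE => /andP[_ lt]; apply: ltnW; apply: leq_ltn_trans lt.
apply: subset_leq_card; apply/subsetP => y; rewrite in_set => /andP[yC yN].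
rewrite in_setI yN andbT; move: yC; rewrite /C in_set => /andP[] //.
Qed.

Lemma exists_subset_card (T : finType) (X : {set T}) k :
  k <= #|X| -> exists F : {set T}, F \subset X /\ #|F| = k.
Proof.
move=> kX; exists [set x in take k (enum X)]; split.
  apply/subsetP => x; rewrite inE => /mem_take; by rewrite mem_enum.
rewrite cardsE; have /card_uniqP -> : uniq (take k (enum X)).
  by apply: take_uniq; apply: enum_uniq.
by rewrite size_take -cardE; case: ltngtP kX => // ->.
Qed.

Definition step {n d} (m N r : nat) (B : {set grid n d})
    (c : bool * {set grid n d} * {set grid n d}) : {set grid n d} :=
  if c.1.1 then (B :\: Dset B m N) :|: c.1.2 else Cont2 B c.1.2 c.2 r.

Lemma Cont2_sub {n d} (B F S : {set grid n d}) r : Cont2 B F S r \subset B.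
Proof. by apply/subsetP => x; rewrite !inE => /andP[/andP[]]. Qed.

Lemma step_lemma {n d} (m r : nat) (A B : {set grid n d}) :
  0 < m -> 0 < r -> 32 * m * m * r <= #|grid n d| -> #|grid n d| < 4 * r * r ->
  sum_free A -> A \subset B -> #|grid n d| * #|grid n d| < m * Tc B ->
  exists c : bool * {set grid n d} * {set grid n d},
    [/\ #|c.1.2| <= 4 * m * r, #|c.2| <= 4 * r,
     A \subset step m #|grid n d| r B c &
     8 * m * #|step m #|grid n d| r B c| + #|grid n d| <= 8 * m * #|B| ].
Proof.
move=> m0 r0 Hr1 Hr2 sfA AB HT.
have HD := Dset_big HT; have BN := max_card B.
set N := #|grid n d| in HD BN Hr1 Hr2 HT *; clearbody N.
set D := Dset B m N.
have DB : D \subset B := Dset_sub B m N.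
rewrite -/D in HD.
case: (ltnP #|A :&: D| (4 * m * r)) => [small|big].
  exists (true, A :&: D, set0); split => //=.
  - exact: ltnW.
  - by rewrite cards0.
  - rewrite /step /=; apply/subsetP => y yA; rewrite !inE yA (subsetP AB y yA).
    by case: (N <= deg B y * (2 * m)).
  rewrite /step /= -/D.
  have H1 := leq_card_setU (B :\: D) (A :&: D).
  have H2 := cardsDS DB.
  have H3 := subset_leq_card DB.
  move: H1; rewrite H2 => H1.
  have H4 : 8 * m * #|A :&: D| <= N.
    apply: leq_trans Hr1; apply: leq_trans (_ : 8 * m * (4 * m * r) <= _).
      by rewrite leq_mul2l (ltnW small) orbT.
    nia.
  have H5 : 8 * m * #|B :\: D :|: A :&: D| <= 8 * m * (#|B| - #|D| + #|A :&: D|).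
    by rewrite leq_mul2l H1 orbT.
  have H6 : 8 * m * #|D| <= 8 * m * #|B| by rewrite leq_mul2l H3 orbT.
  rewrite mulnDr mulnBr in H5.
  have H7 : 4 * N < 8 * m * #|D|.
    rewrite (_ : 8 * m * #|D| = 4 * (2 * m * #|D|)); first by rewrite ltn_pmul2l.
    nia.
  move: H4 H5 H6 H7; clear.
  move: (8 * m * #|D|) (8 * m * #|A :&: D|) (8 * m * #|B|) => a b c.
  move: (8 * m * #|B :\: D :|: A :&: D|) => e; lia.
have [F [FAD cF]] := exists_subset_card big.
have FA : F \subset A by apply: subset_trans FAD (subsetIl _ _).
have FD : F \subset D by apply: subset_trans FAD (subsetIr _ _).
have [S [SA Sr AC]] := @greedy n d A B F r r0 AB FA sfA.
exists (false, F, S); rewrite /step /=; split => //.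
- by rewrite cF.
- have : #|S| * r < 4 * r * r by apply: leq_ltn_trans Hr2; apply: leq_trans Sr BN.
  by move=> H; apply: ltnW; rewrite -(ltn_pmul2r r0).
set C := Cont2 B F S r.
have CB : C \subset B := Cont2_sub B F S r.
set R := B :\: C.
have HR : #|R| = #|B| - #|C| := cardsDS CB.
have HC : #|C| <= #|B| := subset_leq_card CB.
have Hlow : #|F| * N <= \sum_(f in F) (deg B f * (2 * m)).
  rewrite -sum_nat_const; apply: leq_sum => f fF.
  by move: (subsetP FD f fF); rewrite inE => /andP[].
have Hup : \sum_(f in F) deg B f <= \sum_(f in F) deg C f + #|F| * (2 * #|R|).
  rewrite -sum_nat_const -big_split /=; apply: leq_sum => f _; exact: deg_split.
have HW : \sum_(f in F) deg C f <= N * r.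
  apply: leq_trans (Wcont_le B F S r) _; rewrite leq_mul2r; apply/orP; right.
  apply: leq_trans (subset_leq_card CB) BN.
rewrite -big_distrl /= in Hlow.
rewrite cF in Hlow Hup.
move: (\sum_(f in F) deg B f) (\sum_(f in F) deg C f) Hlow Hup HW => s1 s2 Hlow Hup HW.
have key : (2 * m * r) * N <= (2 * m * r) * (8 * m * #|R|) by nia.
rewrite leq_pmul2l in key; last by rewrite !muln_gt0 m0 r0.
move: key; rewrite HR mulnBr.
have : 8 * m * #|C| <= 8 * m * #|B| by rewrite leq_mul2l HC orbT.
move: (8 * m * #|C|) (8 * m * #|B|) => x y; lia.
Qed.

Definition Small {n d} (m r : nat) : {set bool * {set grid n d} * {set grid n d}} :=
  [set c : bool * {set grid n d} * {set grid n d} | (#|c.1.2| <= 4 * m * r) && (#|c.2| <= 4 * r)].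

Fixpoint Fam {n d} (m r : nat) (k : nat) : {set {set grid n d}} :=
  match k with
  | 0 => [set setT]
  | k'.+1 => Fam m r k' :|:
      [set step m #|grid n d| r p.1 p.2 | p in setX (Fam m r k') (Small m r)]
  end.

Lemma Fam_mono {n d} (m r j i : nat) : @Fam n d m r j \subset Fam m r (j + i).
Proof.
elim: i => [|i IH]; first by rewrite addn0.
by rewrite addnS /=; apply: subset_trans IH (subsetUl _ _).
Qed.

Lemma reach {n d} (m r : nat) (A : {set grid n d}) :
  0 < m -> 0 < r -> 32 * m * m * r <= #|grid n d| -> #|grid n d| < 4 * r * r ->
  sum_free A ->
  forall k j B, B \in Fam m r j -> A \subset B ->
    8 * m * #|B| < k * #|grid n d| ->
    exists2 B', B' \in Fam m r (j + k) &
      A \subset B' /\ m * Tc B' <= #|grid n d| * #|grid n d|.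
Proof.
move=> m0 r0 H1 H2 sfA; elim=> [|k IH] j B BF AB HB; first by rewrite mul0n in HB.
case: (leqP (m * Tc B) (#|grid n d| * #|grid n d|)) => HT.
  by exists B => //; apply: (subsetP (Fam_mono _ _ _ _)).
have [c [c1 c2 Ac Hc]] := step_lemma m0 r0 H1 H2 sfA AB HT.
have BF1 : step m #|grid n d| r B c \in Fam m r j.+1.
  rewrite /= inE; apply/orP; right; apply/imsetP; exists (B, c) => //.
  by rewrite in_setX BF inE c1 c2.
have := IH j.+1 _ BF1 Ac.
rewrite addSnnS; apply.
move: Hc HB.
move: (8 * m * #|step m #|grid n d| r B c|) (8 * m * #|B|) #|grid n d| => x y z.
rewrite mulSn; lia.
Qed.

Lemma card_setsle (T : finType) k :
  #|[set X : {set T} | #|X| <= k]| <= expn (#|T|.+1) k.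
Proof.
pose f (g : {ffun 'I_k -> option T}) := [set x | Some x \in codom g].
apply: leq_trans (_ : #|[set f g | g in [set: {ffun 'I_k -> option T}]]| <= _).
  apply: subset_leq_card; apply/subsetP => X; rewrite inE => Xk.
  pose s := map Some (enum X).
  apply/imsetP; exists [ffun i : 'I_k => nth None s i]; first by rewrite inE.
  apply/setP => x; rewrite inE; apply/idP/codomP.
    move=> xX.
    have hi : index (Some x) s < k.
      apply: leq_trans Xk; rewrite cardE -(size_map Some) index_mem.
      by rewrite mem_map ?mem_enum //; move=> ? ? [].
    exists (Ordinal hi); rewrite ffunE /= nth_index //.
    by rewrite mem_map ?mem_enum //; move=> ? ? [].
  case=> i; rewrite ffunE => E.
  case: (ltnP i (size s)) => hi.
    have : Some x \in s by rewrite E mem_nth.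
    by rewrite mem_map ?mem_enum //; move=> ? ? [].
  by rewrite nth_default in E.
apply: leq_trans (leq_imset_card _ _) _.
by rewrite cardsT card_ffun card_option card_ord.
Qed.

Lemma card_Small {n d} (m r : nat) :
  #|@Small n d m r| <= 2 * (expn (#|grid n d|.+1) (4 * m * r) * expn (#|grid n d|.+1) (4 * r)).
Proof.
apply: leq_trans (_ : #|setX (setX [set: bool] [set X : {set grid n d} | #|X| <= 4 * m * r])
                       [set X : {set grid n d} | #|X| <= 4 * r]| <= _).
  apply: subset_leq_card; apply/subsetP => -[[b X] S]; rewrite !inE /= => /andP[-> ->].
  by rewrite andbT.
rewrite !cardsX cardsT card_bool -mulnA leq_mul2l; apply/orP; right.
by apply: leq_mul; apply: card_setsle.
Qed.

Lemma card_Fam {n d} (m r k : nat) :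
  #|@Fam n d m r k| <= expn (#|@Small n d m r|.+1) k.
Proof.
elim: k => [|k IH] /=; first by rewrite cards1.
apply: leq_trans (leq_card_setU _ _) _.
apply: leq_trans (leq_add (leqnn _) (leq_imset_card _ _)) _.
rewrite cardsX expnS mulnC mulSn.
apply: leq_add => //; exact: leq_mul (leqnn _) IH.
Qed.

Lemma grow_base c : c * (2 * (8 * c + 2) + 2) <= expn 2 (8 * c + 2).
Proof.
have h := ltn_expl (4 * c + 1) (isT : 1 < 2).
have -> : 8 * c + 2 = (4 * c + 1) * 2 by lia.
rewrite expnM; move: h; move: (expn 2 (4 * c + 1)) => x h.
rewrite expnS expn1; nia.
Qed.

Lemma grow c j : 8 * c + 2 <= j -> c * (2 * j + 2) <= expn 2 j.
Proof.
elim: j => [|j IH] H; first by lia.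
case: (ltnP (8 * c + 2) j.+1) => H'.
  have := IH H'; rewrite expnS.
  move: (expn 2 j) => x; nia.
have -> : j.+1 = 8 * c + 2 by lia.
exact: grow_base.
Qed.

Lemma params N : 0 < N ->
  let k := trunc_log 2 N in let j := k./2 in let r := expn 2 j in
  [/\ r * r <= N, N < 4 * r * r & k <= 2 * j + 1].
Proof.
move=> N0 /=.
have [lo hi] := andP (trunc_log_bounds (isT : 1 < 2) N0).
move: lo hi; set k := trunc_log 2 N => lo hi.
have hk : odd k + (k./2).*2 = k by rewrite odd_double_half.
move: hk; set j := k./2 => hk.
clearbody j k.
have rr : expn 2 j * expn 2 j = expn 2 (2 * j) by rewrite -expnD addnn mul2n.
split.
- rewrite rr; apply: leq_trans lo; rewrite leq_exp2l //; rewrite -hk mul2n; lia.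
- apply: leq_trans hi _; rewrite -mulnA rr -(expnD 2 2) leq_exp2l //.
  rewrite -hk mul2n; case: (odd k); lia.
- rewrite -hk mul2n; case: (odd k); lia.
Qed.

Lemma INR_expn a b : INR (expn a b) = (INR a ^ b)%R.
Proof.
elim: b => [|b IH] //=; rewrite expnS -IH.
by rewrite -mult_INR.
Qed.

Lemma expn_monob a b e : a <= b -> expn a e <= expn b e.
Proof. by case: e => [|e] ab; rewrite ?expn0 // leq_exp2r. Qed.

Definition rpar n d := expn 2 (trunc_log 2 #|grid n d|)./2.
Definition Cfam d m n : {set {set grid n d}} :=
  [set B in Fam m (rpar n d) (8 * m + 1) | m * Tc B <= #|grid n d| * #|grid n d|].

Lemma card_grid n d : #|grid n d| = expn n d.
Proof. by rewrite /grid card_ffun !card_ord. Qed.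

Lemma Cfam_cover d m n : 0 < m -> 0 < #|grid n d| ->
  32 * m * m * rpar n d <= #|grid n d| ->
  forall A, sum_free A -> exists2 B, B \in Cfam d m n & A \subset B.
Proof.
move=> m0 N0 H A sfA.
have [_ H2 _] := params N0.
have r0 : 0 < rpar n d by rewrite /rpar expn_gt0.
have := @reach n d m (rpar n d) A m0 r0 H H2 sfA (8 * m + 1) 0 setT.
case.
- by rewrite /= inE.
- exact: subsetT.
- rewrite cardsT mulnDl mul1n; move: (8 * m * #|grid n d|) => x; lia.
move=> B BF [AB HB]; exists B => //; by rewrite inE BF HB.
Qed.

Lemma Cfam_card d m n : 0 < #|grid n d| ->
  #|Cfam d m n| <= expn 2 ((8 * m + 1) *
     ((trunc_log 2 #|grid n d|).+1 * (4 * m * rpar n d + 4 * rpar n d) + 2)).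
Proof.
move=> N0.
have [lo hi] := andP (trunc_log_bounds (isT : 1 < 2) N0).
move: lo hi; set k := trunc_log 2 #|grid n d| => lo hi.
apply: leq_trans (_ : #|Fam m (rpar n d) (8 * m + 1)| <= _).
  by apply: subset_leq_card; apply/subsetP => B; rewrite inE => /andP[].
apply: leq_trans (card_Fam _ _ _) _.
rewrite [(8 * m + 1) * _]mulnC expnM; apply: expn_monob.
set r := rpar n d.
have hS := @card_Small n d m r.
have hN : #|grid n d|.+1 <= expn 2 k.+1 by [].
have hX : expn (#|grid n d|.+1) (4 * m * r) <= expn 2 (k.+1 * (4 * m * r)).
  by rewrite [X in _ <= X]expnM; apply: expn_monob.
have hY : expn (#|grid n d|.+1) (4 * r) <= expn 2 (k.+1 * (4 * r)).
  by rewrite [X in _ <= X]expnM; apply: expn_monob.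
have E : expn 2 (k.+1 * (4 * m * r + 4 * r) + 2) =
   expn 2 (k.+1 * (4 * m * r)) * expn 2 (k.+1 * (4 * r)) * 4.
  by rewrite [k.+1 * _]mulnDr !expnD.
rewrite E.
have p1 : 0 < expn 2 (k.+1 * (4 * m * r)) by rewrite expn_gt0.
have p2 : 0 < expn 2 (k.+1 * (4 * r)) by rewrite expn_gt0.
move: hS hX hY p1 p2.
move: (expn (#|grid n d|.+1) (4 * m * r)) (expn (#|grid n d|.+1) (4 * r))
      (expn 2 (k.+1 * (4 * m * r))) (expn 2 (k.+1 * (4 * r))) #|Small m r| => a b x y s.
nia.
Qed.

Lemma real_div_bound (a b m : nat) (eps : R) :
  0 < m -> (/ INR m < eps)%R -> m * a <= b -> (INR a <= eps * INR b)%R.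
Proof.
move=> m0 he hab.
have hm : (0 < INR m)%R by apply: lt_0_INR; apply/ltP.
have h1 : (INR m * INR a <= INR b)%R by rewrite -mult_INR; apply: le_INR; apply/leP.
have hi : (INR m * / INR m = 1)%R by apply: Rinv_r; lra.
have ha : (0 <= INR a)%R := pos_INR a.
have hb : (0 <= INR b)%R := pos_INR b.
have hpi : (0 < / INR m)%R by apply: Rinv_0_lt_compat.
have : (INR a <= / INR m * INR b)%R.
  have -> : INR a = (/ INR m * (INR m * INR a))%R by field; lra.
  by apply: Rmult_le_compat_l; lra.
nra.
Qed.

Lemma log2_le_pow (x E : nat) : 0 < x -> x <= expn 2 E -> (log2 (INR x) <= INR E)%R.
Proof.
move=> x0 xE.
have l2 : (0 < ln 2)%R.
  have h := ln_lt_2; have h2 : (0 < / 2)%R by apply: Rinv_0_lt_compat; lra.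
  lra.
have hx : (0 < INR x)%R by apply: lt_0_INR; apply/ltP.
have hle : (INR x <= 2 ^ E)%R.
  have := le_INR _ _ (elimT leP xE); by rewrite INR_expn.
have : (ln (INR x) <= ln (2 ^ E))%R.
  case: (Rle_lt_or_eq_dec _ _ hle) => h; last by rewrite h; lra.
  by apply: Rlt_le; apply: ln_increasing.
rewrite ln_pow; last lra.
move=> h; rewrite /log2; apply: (Rmult_le_reg_r (ln 2)) => //.
rewrite /Rdiv Rmult_assoc Rinv_l; lra.
Qed.

Lemma big_n d J n : 0 < d -> expn 2 (2 * J + 1) <= n ->
  0 < #|grid n d| /\ J <= (trunc_log 2 #|grid n d|)./2.
Proof.
move=> d0 hn.
have n0 : 0 < n by apply: leq_trans hn; rewrite expn_gt0.
have Nn : n <= #|grid n d|.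
  by rewrite card_grid -{1}(expn1 n) leq_pexp2l.
have N0 : 0 < #|grid n d| by apply: leq_trans Nn.
split => //.
have hk : 2 * J + 1 <= trunc_log 2 #|grid n d|.
  by apply: trunc_log_max => //; apply: leq_trans hn Nn.
move: hk; have := odd_double_half (trunc_log 2 #|grid n d|).
move: (trunc_log 2 #|grid n d|) => k; rewrite -mul2n.
case: (odd k) => /=; lia.
Qed.

Lemma sum_free0 n d : sum_free (set0 : {set grid n d}).
Proof. by apply/forall_inP => a; rewrite inE. Qed.

Lemma r_big d n J c : 0 < d -> expn 2 (2 * (8 * c + 2 + J) + 1) <= n ->
  0 < #|grid n d| /\ c * (2 * (trunc_log 2 #|grid n d|)./2 + 2) <= rpar n d.
Proof.
move=> d0 hn; have [N0 hj] := big_n d0 hn; split => //.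
apply: grow; apply: leq_trans hj; exact: leq_addr.
Qed.

Theorem mainTheorem5 :
  forall (d : nat), (0 < d)%N ->
  forall (eps : R), (0 < eps < 1)%R ->
  exists (n0 : nat) (C : forall n : nat, {set {set grid n d}}),
    (forall n : nat, (n0 <= n)%N ->
       (forall A : {set grid n d}, sum_free A ->
          exists2 B, B \in C n & A \subset B) /\
       (forall B : {set grid n d}, B \in C n ->
          (INR #|schur_triples B| <= eps * INR n ^ (2 * d))%R)) /\
    (forall delta : R, (0 < delta)%R ->
       exists N : nat, forall n : nat, (N <= n)%N ->
         (log2 (INR #|C n|) <= delta * INR n ^ d)%R).
Proof.
move=> d d0 eps [e0 e1].
have [m [hm m0']] := archimed_cor1 eps e0.
have m0 : 0 < m by apply/ltP.
pose c0 := 32 * m * m.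
have cover : forall J n, expn 2 (2 * (8 * c0 + 2 + J) + 1) <= n ->
    forall A : {set grid n d}, sum_free A -> exists2 B, B \in Cfam d m n & A \subset B.
  move=> J n hn; have [N0 hr] := r_big d0 hn.
  apply: Cfam_cover => //.
  have [rr _ _] := params N0.
  apply: leq_trans rr; rewrite leq_mul2r; apply/orP; right.
  apply: leq_trans hr; rewrite /c0; move: (32 * m * m) => x; nia.
exists (expn 2 (2 * (8 * c0 + 2 + 0) + 1)), (Cfam d m); split.
  move=> n hn; split; first exact: cover hn.
  move=> B; rewrite inE => /andP[_ hB].
  have hN : (INR n ^ (2 * d) = INR (#|grid n d| * #|grid n d|))%R.
    rewrite mult_INR card_grid INR_expn -pow_add; f_equal; lia.
  rewrite hN; apply: Rle_trans (real_div_bound m0 hm hB).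
  by apply: le_INR; apply/leP; apply: schur_le_Tc.
move=> delta dl.
have [M [hM M0']] := archimed_cor1 delta dl.
have M0 : 0 < M by apply/ltP.
pose c := M * (8 * m + 1) * (4 * m + 6).
exists (expn 2 (2 * (8 * (c + c0) + 2 + 0) + 1)) => n hn.
have [N0 hr] := r_big d0 hn.
have hr1 : c * (2 * (trunc_log 2 #|grid n d|)./2 + 2) <= rpar n d.
  apply: leq_trans hr; rewrite mulnDl; exact: leq_addr.
have hne : 0 < #|Cfam d m n|.
  have hn' : expn 2 (2 * (8 * c0 + 2 + 8 * c) + 1) <= n.
    apply: leq_trans hn; rewrite leq_exp2l //; lia.
  have [B BC _] := cover _ _ hn' _ (sum_free0 n d).
  by apply/card_gt0P; exists B.
have hcard := Cfam_card m N0.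
apply: Rle_trans (log2_le_pow hne hcard) _.
rewrite -INR_expn -card_grid.
apply: real_div_bound M0 hM _.
have [rr0 _ hk] := params N0.
have rr : rpar n d * rpar n d <= #|grid n d| := rr0.
have r0 : 0 < rpar n d by rewrite /rpar expn_gt0.
move: hr1 rr hk r0.
move: (trunc_log 2 #|grid n d|) => k.
move: #|grid n d| (k./2) (rpar n d) => N j r.
rewrite /c => h1 h2 h3 r0.
have A1 : (k.+1 * (4 * m * r + 4 * r) + 2) <= (2 * j + 2) * (4 * m + 6) * r by nia.
apply: leq_trans (_ : M * ((8 * m + 1) * ((2 * j + 2) * (4 * m + 6) * r)) <= _).
  by rewrite leq_mul2l; apply/orP; right; rewrite leq_mul2l A1 orbT.
apply: leq_trans h2.
apply: leq_trans (_ : M * (8 * m + 1) * (4 * m + 6) * (2 * j + 2) * r <= _).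
  by apply: eq_leq; rewrite !mulnA; nia.
by apply: leq_mul h1 (leqnn r).
Qed.
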